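(* Let $\Sigma$ be a set of basic identities in an algebraic language $\mathcal L$ whose set of constant symbols is $C$, and suppose $\Sigma$ is consistent. Then for every cardinal $\kappa>|C|$, $\Sigma$ has a model of cardinality $\kappa$.
   Context: An $\mathcal L$-term is basic if it contains at most one nonnullary function symbol (so it is a variable, a constant symbol, or $F(u_1,\dots,u_m)$ with each $u_i$ a variable or constant symbol); an identity $s\approx t$ is basic if $s,t$ are basic. For a set $X$ of variables, the weak closure $\overline{\Sigma}$ of $\Sigma$ in the variables $X$ is the smallest set of basic identities containing $\Sigma$ such that: (i) $t\approx t\in\overline\Sigma$ for every basic term $t$ with variables from $X$; (ii) if $s\approx t\in\overline\Sigma$ then $t\approx s\in\overline\Sigma$; (iii) if $r\approx s, s\approx t\in\overline\Sigma$ then $r\approx t\in\overline\Sigma$; (iv) if $s\approx t\in\overline\Sigma$ and $\gamma\colon X\to X\cup C$ is any function, then $s[\gamma]\approx t[\gamma]\in\overline\Sigma$, where $s[\gamma]$ replaces each variable $x$ by $\gamma(x)$; (v) if $t$ is a basic term and $c\approx d\in\overline\Sigma$ for $c,d\in C$, then $t\approx t'\in\overline\Sigma$, where $t'$ is obtained from $t$ by replacing one occurrence of $c$ by $d$. Write $\Sigma\vdash_X\varphi$ if $\varphi\in\overline\Sigma$. $X$ is large enough if it contains at least two variables, $|X|$ is at least the arity of every function symbol occurring in $\Sigma$, and $|X|$ is at least the number of distinct variables occurring in any identity of $\Sigma$. $\Sigma$ is inconsistent if $\Sigma\vdash_X x\approx y$ for some distinct $x,y\in X$ with $X$ large enough,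 and consistent otherwise. *)

(* Defs.v *)
From mathcomp Require Import all_boot.
Set Implicit Arguments. Unset Strict Implicit. Unset Printing Implicit Defensive.

(* An algebraic language: constant symbols C, function symbols F with arities
   ar (the theorem assumes all symbols of F are nonnullary: nullary symbols
   are the constants in C). *)
Section Basic.
Variables (C F : Type) (ar : F -> nat).

Inductive atom : Type := AVar of nat | ACst of C.

Inductive bterm : Type :=
  | BAtom of atom
  | BApp (f : F) (u : 'I_(ar f) -> atom).

Definition identity : Type := (bterm * bterm)%type.

Definition atom_vars (a : atom) : seq nat :=
  match a with AVar x => [:: x] | ACst _ => [::] end.

Definition vars (t : bterm) : seq nat :=
  match t with
  | BAtom a => atom_vars a
  | BApp f u => flatten [seq atom_vars (u i) | i <- enum 'I_(ar f)]
  end.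

Definition atom_subst (g : nat -> atom) (a : atom) : atom :=
  match a with AVar x => g x | ACst c => ACst c end.

Definition subst (g : nat -> atom) (t : bterm) : bterm :=
  match t with
  | BAtom a => BAtom (atom_subst g a)
  | BApp f u => BApp (fun i => atom_subst g (u i))
  end.

(* gamma : X -> X u C (extended by the identity outside X) *)
Definition admissible (X : nat -> Prop) (g : nat -> atom) : Prop :=
  forall x, (X x -> match g x with AVar y => X y | ACst _ => True end)
            /\ (~ X x -> g x = AVar x).

Inductive replace_one (c d : C) : bterm -> bterm -> Prop :=
  | ro_atom : replace_one c d (BAtom (ACst c)) (BAtom (ACst d))
  | ro_app (f : F) (u : 'I_(ar f) -> atom) (i : 'I_(ar f)) :
      u i = ACst c ->
      replace_one c d (BApp u) (BApp (fun j => if j == i then ACst d else u j)).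

Inductive weak_closure (X : nat -> Prop) (Sigma : identity -> Prop)
  : identity -> Prop :=
  | wc_ax phi : Sigma phi -> weak_closure X Sigma phi
  | wc_refl t : (forall x, x \in vars t -> X x) -> weak_closure X Sigma (t, t)
  | wc_sym s t : weak_closure X Sigma (s, t) -> weak_closure X Sigma (t, s)
  | wc_trans r s t : weak_closure X Sigma (r, s) -> weak_closure X Sigma (s, t) ->
      weak_closure X Sigma (r, t)
  | wc_subst s t g : admissible X g -> weak_closure X Sigma (s, t) ->
      weak_closure X Sigma (subst g s, subst g t)
  | wc_const t t' c d :
      weak_closure X Sigma (BAtom (ACst c), BAtom (ACst d)) ->
      replace_one c d t t' -> weak_closure X Sigma (t, t').

Definition atleast (X : nat -> Prop) (n : nat) : Prop :=
  exists s : seq nat, [/\ uniq s, n <= size s & forall x, x \in s -> X x].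

Definition head_sym (t : bterm) : option F :=
  match t with BAtom _ => None | BApp f _ => Some f end.

Definition large_enough (X : nat -> Prop) (Sigma : identity -> Prop) : Prop :=
  [/\ atleast X 2,
      (forall phi f, Sigma phi ->
          head_sym phi.1 = Some f \/ head_sym phi.2 = Some f -> atleast X (ar f))
    & (forall phi, Sigma phi ->
          atleast X (size (undup (vars phi.1 ++ vars phi.2))))].

Definition inconsistent (Sigma : identity -> Prop) : Prop :=
  exists X, large_enough X Sigma /\
    exists x y, [/\ X x, X y, x <> y &
                    weak_closure X Sigma (BAtom (AVar x), BAtom (AVar y))].

Definition consistent (Sigma : identity -> Prop) : Prop := ~ inconsistent Sigma.

Record structure (M : Type) : Type := Structure {
  cst : C -> M;
  fn : forall f : F, ('I_(ar f) -> M) -> M }.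

Definition eval_atom M (A : structure M) (v : nat -> M) (a : atom) : M :=
  match a with AVar x => v x | ACst c => cst A c end.

Definition eval M (A : structure M) (v : nat -> M) (t : bterm) : M :=
  match t with
  | BAtom a => eval_atom A v a
  | BApp f u => fn A (fun i => eval_atom A v (u i))
  end.

Definition models M (A : structure M) (Sigma : identity -> Prop) : Prop :=
  forall phi, Sigma phi -> forall v : nat -> M, eval A v phi.1 = eval A v phi.2.

End Basic.

(* Main.v *)
Require Import Defs.
From Stdlib Require Import ClassicalEpsilon FunctionalExtensionality PropExtensionality ProofIrrelevance Classical.
From mathcomp Require Import all_boot.
Set Implicit Arguments. Unset Strict Implicit. Unset Printing Implicit Defensive.

Section Pf.
Variables (C F : Type) (ar : F -> nat) (Sigma : identity C ar -> Prop).

Local Notation At := (BAtom ar).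
Local Notation V := (AVar C).
Definition RR (p : identity C ar) := weak_closure (fun _ => True) Sigma p.

Lemma adm_all (g : nat -> atom C) : admissible (fun _ => True) g.
Proof. move=> x; split=> [_|H]; first by case: (g x). by case: (H I). Qed.

Lemma R_refl (t : bterm C ar) : RR (t, t).
Proof. by apply: wc_refl. Qed.
Lemma R_sym (s t : bterm C ar) : RR (s, t) -> RR (t, s).
Proof. exact: wc_sym. Qed.
Lemma R_trans (r s t : bterm C ar) : RR (r, s) -> RR (s, t) -> RR (r, t).
Proof. exact: wc_trans. Qed.
Lemma R_subst g (s t : bterm C ar) : RR (s, t) -> RR (subst g s, subst g t).
Proof. apply: wc_subst; exact: adm_all. Qed.

Hypothesis Hcons : forall x y : nat, x <> y ->
  ~ RR (At (V x), At (V y)).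

Definition shift x (z : nat) : atom C := if z == x then V x.+1 else V z.

Lemma R_var_const x c : ~ RR (At (V x), At (ACst c)).
Proof.
move=> H; have H2 := R_subst (shift x) H.
rewrite /= /shift eqxx in H2.
apply: (Hcons (x:=x) (y:=x.+1)); first by elim: x {H H2}.
exact: R_trans H (R_sym H2).
Qed.

Lemma R_var_in f (u : 'I_(ar f) -> atom C) x :
  RR (BApp u, At (V x)) -> exists i, u i = V x.
Proof.
move=> H; apply: NNPP => Hn.
have H2 := R_subst (shift x) H.
have E : (fun i => atom_subst (shift x) (u i)) = u.
  apply: functional_extensionality => i.
  case E: (u i) => [z|c] //=; rewrite /shift.
  case: eqP => // ?; subst z; case: Hn; by exists i.
rewrite /= E /shift eqxx in H2.
apply: (Hcons (x:=x) (y:=x.+1)); first by elim: x {H H2 E Hn}.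
exact: R_trans (R_sym H) H2.
Qed.

Variables (K : Type) (inj : C -> K).
Hypothesis inj_inj : injective inj.
Variable d0 : K.

Definition rep c := epsilon (inhabits c) (fun e => RR (At (ACst c), At (ACst e))).
Lemma rep_R c : RR (At (ACst c), At (ACst (rep c))).
Proof. apply: (epsilon_spec (inhabits c) (fun e => RR (At (ACst c), At (ACst e)))).
by exists c; apply: R_refl. Qed.

Lemma rep_eq c e : RR (At (ACst c), At (ACst e)) -> rep c = rep e.
Proof.
move=> H; rewrite /rep.
have -> : (fun e0 => RR (At (ACst c), At (ACst e0))) =
          (fun e0 => RR (At (ACst e), At (ACst e0))).
  apply: functional_extensionality => z; apply: propositional_extensionality; split=> Hz.
    exact: R_trans (R_sym H) Hz.
  exact: R_trans H Hz.
by rewrite (proof_irrelevance _ (inhabits c) (inhabits e)).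
Qed.

Definition iota c := inj (rep c).
Lemma iota_R c e : iota c = iota e <-> RR (At (ACst c), At (ACst e)).
Proof.
split=> [/inj_inj H|H]; last by rewrite /iota (rep_eq H).
apply: R_trans (rep_R c) _; rewrite H; exact: R_sym (rep_R e).
Qed.

Definition ev (w : nat -> K) (b : atom C) : K :=
  match b with AVar x => w x | ACst c => iota c end.

Lemma R_atoms b1 b2 w : RR (At b1, At b2) -> ev w b1 = ev w b2.
Proof.
case: b1 => [x|c]; case: b2 => [y|e] H /=.
- have [->//|Hxy] := eqVneq x y; by case: (Hcons (elimN eqP Hxy) H).
- by case: (R_var_const H).
- by case: (R_var_const (R_sym H)).
- by apply/iota_R.
Qed.

Lemma R_crep f (u u' : 'I_(ar f) -> atom C) :
  (forall i, u i = u' i \/ exists c e, [/\ u i = ACst c, u' i = ACst e &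
      RR (At (ACst c), At (ACst e))]) -> RR (BApp u, BApp u').
Proof.
move=> Hu.
pose v k (j : 'I_(ar f)) := if j < k then u' j else u j.
suff H : forall k, RR (BApp u, BApp (v k)).
  have := H (ar f); rewrite (_ : v (ar f) = u') //.
  by apply: functional_extensionality => j; rewrite /v ltn_ord.
elim=> [|k IH].
  rewrite (_ : v 0 = u); first exact: R_refl.
  by apply: functional_extensionality => j.
case: (ltnP k (ar f)) => Hk.
- pose i := Ordinal Hk.
  case: (Hu i) => [E|[c [e [E1 E2 Rce]]]].
  + rewrite (_ : v k.+1 = v k) //.
    apply: functional_extensionality => j; rewrite /v ltnS leq_eqVlt.
    case: (eqVneq (nat_of_ord j) k) => [Hj|Hj] //=.
    have -> : j = i by apply: val_inj.
    by rewrite /= ltnn E.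
  + apply: R_trans IH _.
    apply: (wc_const (c:=c) (d:=e)) Rce _.
    rewrite (_ : v k.+1 = fun j => if j == i then ACst e else v k j).
      by apply: ro_app; rewrite /v /= ltnn.
    apply: functional_extensionality => j; rewrite /v ltnS leq_eqVlt.
    case: (eqVneq j i) => [->|Hj]; first by rewrite /= eqxx.
    have Hj' : (nat_of_ord j == k) = false.
      by apply/negP => /eqP Hjk; case/eqP: Hj; apply: val_inj.
    by rewrite Hj'.
- rewrite (_ : v k.+1 = v k) //.
  apply: functional_extensionality => j; rewrite /v.
  have h1 : j < k by apply: leq_trans (ltn_ord j) Hk.
  by rewrite h1 ltnS (ltnW h1).
Qed.

Definition generic f (u : 'I_(ar f) -> atom C) (w : nat -> K) (a : 'I_(ar f) -> K) :=
 [/\ forall i, ev w (u i) = a i,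
     forall i, (exists c, u i = ACst c) <-> (exists c, a i = iota c) &
     forall i j x y, u i = V x -> u j = V y -> a i = a j -> x = y].

Lemma transfer f (u1 u2 : 'I_(ar f) -> atom C) w1 w2 a b :
  generic u1 w1 a -> generic u2 w2 a -> RR (BApp u1, At b) ->
  exists b', RR (BApp u2, At b') /\ ev w2 b' = ev w1 b.
Proof.
move=> [g11 g12 g13] [g21 g22 g23] H.
pose rho x := match excluded_middle_informative (exists i, u1 i = V x) with
  | left Hx => u2 (proj1_sig (constructive_indefinite_description _ Hx))
  | right _ => V x end.
have Krho : forall i x, u1 i = V x -> rho x = u2 i.
  move=> i x Hi; rewrite /rho.
  case: excluded_middle_informative => [Hx|Hn]; last by case: Hn; exists i.
  case: constructive_indefinite_description => j Hj /=.
  have Eaj : a j = a i by rewrite -g11 -(g11 i) Hj Hi.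
  have nc : forall k, u1 k = V x -> ~ exists c, u2 k = ACst c.
    move=> k Hk /g22 /g12 [c Hc]; by rewrite Hk in Hc.
  case E1: (u2 j) => [y1|c1]; last by case: (nc j Hj); exists c1.
  case E2: (u2 i) => [y2|c2]; last by case: (nc i Hi); exists c2.
  by rewrite (g23 _ _ _ _ E1 E2 Eaj).
have HR1 := R_subst rho H.
have HR2 : RR (BApp (fun i => atom_subst rho (u1 i)), BApp u2).
  apply: R_crep => i.
  case E: (u1 i) => [x|c] /=; first by left; apply: Krho.
  have : exists c, u2 i = ACst c by apply/g22/g12; exists c.
  case=> e He; right; exists c, e; split=> //.
  apply/iota_R; have := g11 i; have := g21 i; rewrite E He /= => -> -> //.
exists (atom_subst rho b); split.
  exact: R_trans (R_sym HR2) HR1.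
case: b H {HR1} => [x|c] H //=.
have [i Hi] := R_var_in H.
by rewrite (Krho _ _ Hi) g21 -(g11 i) Hi.
Qed.

Definition Q f (a : 'I_(ar f) -> K) (m : K) :=
  exists u w b, [/\ generic u w a, RR (BApp u, At b) & ev w b = m].

Lemma Q_uniq f (a : 'I_(ar f) -> K) m1 m2 : Q a m1 -> Q a m2 -> m1 = m2.
Proof.
move=> [u1 [w1 [b1 [G1 R1 <-]]]] [u2 [w2 [b2 [G2 R2 <-]]]].
have [b' [R' E']] := transfer G1 G2 R1.
rewrite -E'; apply: R_atoms; exact: R_trans (R_sym R') R2.
Qed.

Lemma Q_move f f' (a : 'I_(ar f) -> K) (a' : 'I_(ar f') -> K) u1 u2 v m :
  generic u1 v a -> generic u2 v a' -> RR (BApp u1, BApp u2) -> Q a m -> Q a' m.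
Proof.
move=> G1 G2 H [u [w [b [G R <-]]]].
have [b' [R' E']] := transfer G G1 R.
exists u2, v, b'; split=> //; exact: R_trans (R_sym H) R'.
Qed.

Definition fnK f (a : 'I_(ar f) -> K) : K :=
  match excluded_middle_informative (exists m, Q a m) with
  | left H => proj1_sig (constructive_indefinite_description _ H)
  | right _ => d0 end.

Lemma fnK_spec f (a : 'I_(ar f) -> K) m : Q a m -> fnK a = m.
Proof.
move=> Hm; rewrite /fnK; case: excluded_middle_informative => [H|H].
  case: constructive_indefinite_description => m' Hm' /=; exact: Q_uniq Hm' Hm.
by case: H; exists m.
Qed.

Lemma fnK_eq f f' (a : 'I_(ar f) -> K) (a' : 'I_(ar f') -> K) :
  (forall m, Q a m -> Q a' m) -> (forall m, Q a' m -> Q a m) -> fnK a = fnK a'.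
Proof.
move=> H1 H2; rewrite /fnK.
case: excluded_middle_informative => [H|H];
case: excluded_middle_informative => [H'|H'] //.
- case: constructive_indefinite_description => m Hm /=.
  case: constructive_indefinite_description => m' Hm' /=.
  exact: Q_uniq (H1 _ Hm) Hm'.
- by case: H'; case: H => m /H1 Hm; exists m.
- by case: H; case: H' => m /H2 Hm; exists m.
Qed.

Definition gam (L : seq nat) (v : nat -> K) (x : nat) : atom C :=
  match excluded_middle_informative (exists c, v x = iota c) with
  | left H => ACst (proj1_sig (constructive_indefinite_description _ H))
  | right _ => V (epsilon (inhabits 0) (fun z => z \in L /\ v z = v x)) end.

Lemma gam_ev L v x : x \in L -> ev v (gam L v x) = v x.
Proof.
move=> Hx; rewrite /gam; case: excluded_middle_informative => [H|H] /=.
  by case: constructive_indefinite_description => c Hc /=.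
have := epsilon_spec (inhabits 0) (fun z => z \in L /\ v z = v x).
by case=> [|_ ->] //; exists x.
Qed.

Lemma gam_generic f (u : 'I_(ar f) -> atom C) L v :
  (forall i x, u i = V x -> x \in L) ->
  generic (fun i => atom_subst (gam L v) (u i)) v (fun i => ev v (u i)).
Proof.
move=> HL; split.
- move=> i; case E: (u i) => [x|c] //=; apply: gam_ev; exact: HL E.
- move=> i; case E: (u i) => [x|c] /=; last by split=> _; exists c.
  rewrite /gam; case: excluded_middle_informative => [H|H].
    by split=> _ //; eexists.
  by split=> -[c' E'] //; case: H; exists c'.
- move=> i j x y; case: (u i) => [x1|c1] //=; case: (u j) => [x2|c2] //=.
  rewrite /gam.
  case: excluded_middle_informative => [H1|H1] //;
  case: excluded_middle_informative => [H2|H2] // [<-] [<-] ->.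
  done.
Qed.

Lemma var_mem f (u : 'I_(ar f) -> atom C) i x : u i = V x -> x \in vars (BApp u).
Proof.
move=> E; apply/flattenP; exists (atom_vars (u i)).
  by apply: map_f; rewrite mem_enum.
by rewrite E /= inE.
Qed.

Lemma app_atom f (u : 'I_(ar f) -> atom C) b v L :
  (forall x, x \in vars (BApp u) -> x \in L) -> (forall x, x \in vars (At b) -> x \in L) ->
  RR (subst (gam L v) (BApp u), subst (gam L v) (At b)) ->
  fnK (fun i => ev v (u i)) = ev v b.
Proof.
move=> Hu Hb H; apply: fnK_spec.
exists (fun i => atom_subst (gam L v) (u i)), v, (atom_subst (gam L v) b); split=> //.
  apply: gam_generic => i x E; apply: Hu; exact: var_mem E.
case: b Hb {H} => [x|c] Hb //=; apply: gam_ev; apply: Hb; by rewrite inE.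
Qed.

Definition Mod := Structure (ar:=ar) iota fnK.

Lemma eval_atomE w b : eval_atom Mod w b = ev w b.
Proof. by case: b. Qed.

Lemma evalApp f (u : 'I_(ar f) -> atom C) w :
  eval Mod w (BApp u) = fnK (fun i => ev w (u i)).
Proof.
rewrite /=; congr (fnK _); apply: functional_extensionality => i; exact: eval_atomE.
Qed.

Lemma Mod_models : models Mod Sigma.
Proof.
move=> [s t] HS v /=.
pose L := vars s ++ vars t.
have HR : RR (subst (gam L v) s, subst (gam L v) t) by apply: R_subst; apply: wc_ax.
have Hs : forall x, x \in vars s -> x \in L by move=> x; rewrite mem_cat => ->.
have Ht : forall x, x \in vars t -> x \in L by move=> x; rewrite mem_cat orbC => ->.
clearbody L.
case: s HS HR Hs => [b1|f1 u1] HS HR Hs; case: t HS HR Ht => [b2|f2 u2] HS HR Ht.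
- rewrite /= !eval_atomE; apply: R_atoms; exact: wc_ax.
- rewrite evalApp /= eval_atomE; symmetry; exact: app_atom Ht Hs (R_sym HR).
- rewrite evalApp /= eval_atomE; exact: app_atom Hs Ht HR.
- rewrite !evalApp.
  have G1 := gam_generic v (fun i x E => Hs x (var_mem E)).
  have G2 := gam_generic v (fun i x E => Ht x (var_mem E)).
  apply: fnK_eq => m; [exact: Q_move G1 G2 HR | exact: Q_move G2 G1 (R_sym HR)].
Qed.

End Pf.

Lemma atleast_all n : atleast (fun _ => True) n.
Proof. exists (seq.iota 0 n); split=> //; by rewrite ?iota_uniq ?size_iota. Qed.

Lemma cons_R C F (ar : F -> nat) (Sigma : identity C ar -> Prop) :
  consistent Sigma -> forall x y : nat, x <> y ->
  ~ RR Sigma (BAtom ar (AVar C x), BAtom ar (AVar C y)).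
Proof.
move=> Hc x y Hxy HR; apply: Hc; exists (fun _ => True); split.
  by split=> *; apply: atleast_all.
by exists x, y; split.
Qed.

Theorem corollary4p5 (C F : Type) (ar : F -> nat) (Har : forall f, 0 < ar f)
  (Sigma : identity C ar -> Prop) :
  consistent Sigma ->
  forall K : Type,
    (exists i : C -> K, injective i) ->     (* |C| <= |K| *)
    ~ (exists j : K -> C, injective j) ->   (* not |K| <= |C| *)
    exists (M : Type) (A : structure C ar M),
      (exists h : M -> K, bijective h) /\ models A Sigma.
Proof.
move=> Hc K [i Hi] Hnj.
case: (classic (inhabited K)) => [[d0]|Hne]; last first.
  case: Hnj; exists (fun k => False_rect _ (Hne (inhabits k))).
  by move=> k; case: (Hne (inhabits k)).
exists K, (Mod Sigma i d0); split.
  by exists id; exists id.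
exact: (Mod_models (cons_R Hc) Hi).
Qed.
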